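(* Let $G$ be a graph with a vertex $r$ that belongs to at least one but not all minimum vertex covers of $G$ and satisfies $N[r]\subsetneq V(G)$. Let $Y$ be a minimal blocking set of $G$ with $r\notin Y$. Then: (i) $Y$ is a blocking set of $G-r$ and $Y\setminus N[r]$ is a blocking set of $G-N[r]$; (ii) for every minimal blocking set $Y'$ of $G-r$ and every minimal blocking set $\widetilde Y$ of $G-N[r]$, the set $Y'\cup\widetilde Y$ is a blocking set of $G$; (iii) for every $y\in Y$, either $Y\setminus\{y\}$ is not a blocking set of $G-r$, or $Y\setminus(\{y\}\cup N[r])$ is not a blocking set of $G-N[r]$.
   Context: $\mathrm{OPT}(G)$ is the minimum vertex cover size; minimum vertex covers have size $\mathrm{OPT}(G)$. $Y\subseteq V(G)$ is a blocking set if no minimum vertex cover contains $Y$; minimal if no proper subset is. $N(r)$ is the open and $N[r]=N(r)\cup\{r\}$ the closed neighborhood of $r$. *)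

(* Defs.v *)
(* A finite simple graph G is a finType T of vertices with a
   symmetric irreflexive edge relation e : rel T.  Induced subgraphs G[S]
   (e.g. G - r, G - N[r]) are given by their vertex set S : {set T}. *)
From HB Require Import structures.
From mathcomp Require Import all_boot.
Set Implicit Arguments. Unset Strict Implicit. Unset Printing Implicit Defensive.

Definition is_vc (T : finType) (e : rel T) (S C : {set T}) : bool :=
  (C \subset S) &&
  [forall x in S, forall y in S, e x y ==> (x \in C) || (y \in C)].

Definition OPT (T : finType) (e : rel T) (S : {set T}) : nat :=
  \big[minn/#|S|]_(C : {set T} | is_vc e S C) #|C|.
(* (S itself is always a vertex cover of G[S], so #|S| is a harmless default) *)

Definition is_mvc (T : finType) (e : rel T) (S C : {set T}) : bool :=
  is_vc e S C && (#|C| == OPT e S).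

Definition blocking (T : finType) (e : rel T) (S Y : {set T}) : bool :=
  (Y \subset S) && ~~ [exists C : {set T}, is_mvc e S C && (Y \subset C)].

Definition min_blocking (T : finType) (e : rel T) (S Y : {set T}) : bool :=
  blocking e S Y && [forall Z : {set T}, (Z \proper Y) ==> ~~ blocking e S Z].

Definition nbh (T : finType) (e : rel T) (r : T) : {set T} := [set x | e r x].
Definition cnbh (T : finType) (e : rel T) (r : T) : {set T} := r |: nbh e r.

(* Main.v *)
Require Import Defs.
From HB Require Import structures.
From mathcomp Require Import all_boot.
From mathcomp Require Import zify.
Set Implicit Arguments. Unset Strict Implicit. Unset Printing Implicit Defensive.

Section Aux.
Variables (T : finType) (e : rel T).

Lemma opt_le S C : is_vc e S C -> OPT e S <= #|C|.
Proof.
move=> H; rewrite /OPT.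
have : C \in index_enum {set T} by rewrite /index_enum -enumT mem_enum.
elim: (index_enum _) => [//|a s IH]; rewrite inE big_cons.
case/orP=> [/eqP <-|Cs]; first by rewrite H geq_minl.
case: (is_vc e S a); last exact: IH.
by rewrite geq_min IH ?orbT.
Qed.

Lemma vcS S : is_vc e S S.
Proof.
apply/andP; split=> //; apply/forallP=> x; apply/implyP=> xS.
by apply/forallP=> y; apply/implyP=> _; rewrite xS implybT.
Qed.

Lemma opt_ex S : exists C, is_vc e S C /\ #|C| = OPT e S.
Proof.
rewrite /OPT; apply: (big_ind (fun n => exists C, is_vc e S C /\ #|C| = n)).
- by exists S; split=> //; apply: vcS.
- move=> x y [C [H1 H2]] [D [H3 H4]].
  case: (leqP x y) => h.
  + by exists C; split=> //; rewrite (minn_idPl h).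
  + by exists D; split=> //; rewrite (minn_idPr (ltnW h)).
- by move=> C H; exists C.
Qed.

Lemma mvcP S C : is_mvc e S C <-> is_vc e S C /\ forall D, is_vc e S D -> #|C| <= #|D|.
Proof.
split.
- case/andP=> H /eqP E; split=> // D HD; rewrite E; exact: opt_le.
- case=> H1 H2; apply/andP; split=> //.
  have [C0 [H3 H4]] := opt_ex S.
  by rewrite eqn_leq opt_le // andbT -H4 H2.
Qed.

Lemma vcE S C : is_vc e S C <-> C \subset S /\
   forall x y, x \in S -> y \in S -> e x y -> (x \in C) || (y \in C).
Proof.
split.
- case/andP=> H1 /forallP H2; split=> // x y xS yS exy.
  by move: (H2 x); rewrite xS /= => /forallP/(_ y); rewrite yS /= exy.
- case=> H1 H2; apply/andP; split=> //; apply/forallP=> x; apply/implyP=> xS.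
  apply/forallP=> y; apply/implyP=> yS; apply/implyP; exact: H2.
Qed.

End Aux.

Section Transfer.
Variables (T : finType) (e : rel T) (e_sym : symmetric e) (r : T).
Let V := [set: T].
Let A := V :\ r.
Let N := nbh e r.
Let B := ~: cnbh e r.

Lemma inN x : (x \in N) = e r x.
Proof. by rewrite /N /nbh inE. Qed.

Lemma inB x : (x \in B) = (x != r) && ~~ e r x.
Proof. by rewrite /B /cnbh !inE negb_or. Qed.

Lemma vcA C : is_vc e V C -> is_vc e A (C :\ r).
Proof.
case/vcE=> _ H; apply/vcE; split; first by apply/subsetP=> x; rewrite !inE => /andP[->].
move=> x y; rewrite !inE => /andP[xr _] /andP[yr _] exy.
by rewrite xr yr /=; apply: H.
Qed.

Lemma vcA' D : is_vc e A D -> is_vc e V (r |: D).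
Proof.
case/vcE=> _ H; apply/vcE; split; first exact: subsetT.
move=> x y _ _ exy; rewrite !in_setU1.
case: (eqVneq x r) => // xr; case: (eqVneq y r) => //= [_|yr]; first by rewrite orbT.
by apply: H; rewrite // !inE ?xr ?yr.
Qed.

Lemma vcN C : is_vc e V C -> r \notin C -> N \subset C.
Proof.
case/vcE=> _ H rC; apply/subsetP=> x; rewrite inN => erx.
by move: (H r x (in_setT r) (in_setT x) erx); rewrite (negbTE rC).
Qed.

Lemma vcB C : is_vc e V C -> r \notin C -> is_vc e B (C :\: N).
Proof.
move=> HC rC; have NC := vcN HC rC.
case/vcE: HC=> _ H; apply/vcE; split.
  apply/subsetP=> x; rewrite inB in_setD inN => /andP[-> xC]; rewrite andbT.
  by apply/eqP=> xr; move: rC; rewrite -xr xC.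
move=> x y xB yB exy; rewrite !in_setD !inN.
move: xB yB; rewrite !inB => /andP[_ ->] /andP[_ ->] /=; exact: H.
Qed.

Lemma vcB' D : is_vc e B D -> is_vc e V (N :|: D).
Proof.
case/vcE=> _ H; apply/vcE; split; first exact: subsetT.
move=> x y _ _ exy; rewrite !in_setU !inN.
case: (eqVneq x r) => [xr|xr]; first by subst x; rewrite exy orbT.
case: (eqVneq y r) => [yr|yr]; first by subst y; rewrite e_sym exy.
case: (boolP (e r x)) => //= rx; case: (boolP (e r y)) => //= ry; first by rewrite orbT.
by apply: H; rewrite // inB ?xr ?yr ?rx ?ry.
Qed.

Lemma mvcA C : is_mvc e V C -> r \in C -> is_mvc e A (C :\ r).
Proof.
case/mvcP=> H1 H2 rC; apply/mvcP; split; first exact: vcA.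
move=> D HD; have := H2 _ (vcA' HD).
have := cardsD1 r C; have := cardsU1 r D; rewrite rC; lia.
Qed.

Lemma mvcA' D C0 : is_mvc e A D -> is_mvc e V C0 -> r \in C0 -> is_mvc e V (r |: D).
Proof.
case/mvcP=> H1 H2 /mvcP[H3 H4] rC0; apply/mvcP; split; first exact: vcA'.
move=> C' HC'; have := H4 _ HC'; have := H2 _ (vcA H3).
have := cardsD1 r C0; have := cardsU1 r D; rewrite rC0; case: (r \notin D) => /=; lia.
Qed.

Lemma mvcB C : is_mvc e V C -> r \notin C -> is_mvc e B (C :\: N).
Proof.
case/mvcP=> H1 H2 rC; apply/mvcP; split; first exact: vcB.
have NC := vcN H1 rC.
move=> D HD; have := H2 _ (vcB' HD).
have := cardsD C N; rewrite (setIidPr NC).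
have := cardsU N D; have := subset_leq_card NC; move=> ? ? ? ?; lia.
Qed.

Lemma mvcB' D C0 : is_mvc e B D -> is_mvc e V C0 -> r \notin C0 -> is_mvc e V (N :|: D).
Proof.
case/mvcP=> H1 H2 /mvcP[H3 H4] rC0; apply/mvcP; split; first exact: vcB'.
have NC := vcN H3 rC0.
move=> C' HC'; have := H4 _ HC'; have := H2 _ (vcB H3 rC0).
have := cardsD C0 N; rewrite (setIidPr NC).
have := cardsU N D; have := subset_leq_card NC; move=> ? ? ? ? ?; lia.
Qed.

End Transfer.

Theorem mainTheorem13 (T : finType) (e : rel T)
  (e_sym : symmetric e) (e_irr : irreflexive e) (r : T)
  (r_in : exists C : {set T}, is_mvc e [set: T] C /\ r \in C)
  (r_out : exists C : {set T}, is_mvc e [set: T] C /\ r \notin C)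
  (hN : cnbh e r \proper [set: T])
  (Y : {set T}) (hY : min_blocking e [set: T] Y) (hrY : r \notin Y) :
  (blocking e ([set: T] :\ r) Y /\
   blocking e (~: cnbh e r) (Y :\: cnbh e r)) /\
  (forall Y' Yt : {set T},
     min_blocking e ([set: T] :\ r) Y' ->
     min_blocking e (~: cnbh e r) Yt ->
     blocking e [set: T] (Y' :|: Yt)) /\
  (forall y, y \in Y ->
     ~~ blocking e ([set: T] :\ r) (Y :\ y) \/
     ~~ blocking e (~: cnbh e r) (Y :\: (y |: cnbh e r))).
Proof.
have [C1 [HC1 rC1]] := r_in; have [C2 [HC2 rC2]] := r_out.
case/andP: hY => /andP[_ hYb] hYm.
split; [split|split].
- apply/andP; split.
    by apply/subsetP=> x xY; rewrite !inE andbT; apply/eqP=> xr; move: hrY; rewrite -xr xY.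
  apply/negP=> /existsP[D /andP[HD YD]]; move/negP: hYb; apply; apply/existsP.
  exists (r |: D); rewrite (mvcA' HD HC1 rC1) /=.
  by apply: subset_trans YD _; apply/subsetP=> x xD; rewrite !inE xD orbT.
- apply/andP; split.
    by apply/subsetP=> x; rewrite !inE => /andP[].
  apply/negP=> /existsP[D /andP[HD YD]]; move/negP: hYb; apply; apply/existsP.
  exists (nbh e r :|: D); rewrite (mvcB' e_sym HD HC2 rC2) /=.
  apply/subsetP=> x xY; rewrite in_setU.
  case: (boolP (x \in cnbh e r)) => xN.
    move: xN; rewrite /cnbh in_setU1 => /orP[/eqP xr|->//].
    by move: hrY; rewrite -xr xY.
  by rewrite (subsetP YD) ?orbT // in_setD xN.
- move=> Y' Yt /andP[/andP[Y'A hY'] _] /andP[/andP[YtB hYt] _].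
  apply/andP; split; first exact: subsetT.
  apply/negP=> /existsP[C /andP[HC YC]].
  case: (boolP (r \in C)) => rC.
    move/negP: hY'; apply; apply/existsP; exists (C :\ r).
    rewrite (mvcA HC rC) /=; apply/subsetP=> x xY.
    have := subsetP Y'A x xY; rewrite !inE => /andP[-> _] /=.
    by apply: (subsetP YC); rewrite inE xY.
  move/negP: hYt; apply; apply/existsP; exists (C :\: nbh e r).
  rewrite (mvcB e_sym HC rC) /=; apply/subsetP=> x xY.
  have := subsetP YtB x xY; rewrite !inE negb_or => /andP[_ ->] /=.
  by apply: (subsetP YC); rewrite inE xY orbT.
- move=> y yY.
  have Hp : Y :\ y \proper Y by rewrite properD1.
  move/forallP: hYm => /(_ (Y :\ y)); rewrite Hp /= /blocking subsetT /= negbK.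
  case/existsP=> C /andP[HC YC].
  case: (boolP (r \in C)) => rC; [left|right]; rewrite /blocking negb_and; apply/orP; right;
    rewrite negbK; apply/existsP.
    exists (C :\ r); rewrite (mvcA HC rC) /=; apply/subsetP=> x.
    rewrite !inE => /andP[xy xY]; rewrite (subsetP YC) ?andbT; last by rewrite !inE xy.
    by apply/eqP=> xr; move: hrY; rewrite -xr xY.
  exists (C :\: nbh e r); rewrite (mvcB e_sym HC rC) /=; apply/subsetP=> x.
  rewrite !inE !negb_or => /andP[/andP[xy /andP[_ ->]] xY] /=.
  by rewrite (subsetP YC) // !inE xy.
Qed.
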